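(* Let $A$ be the $8\times 8$ adjacency matrix of Ashley's graph, the directed graph on vertices $v_1,\dots,v_8$ with exactly the following 16 edges: $v_1\to v_1$, $v_1\to v_3$, $v_2\to v_2$, $v_2\to v_1$, $v_3\to v_5$, $v_3\to v_6$, $v_4\to v_2$, $v_4\to v_8$, $v_5\to v_7$, $v_5\to v_4$, $v_6\to v_4$, $v_6\to v_5$, $v_7\to v_8$, $v_7\to v_3$, $v_8\to v_6$, $v_8\to v_7$. Then $A$ is unitally shift equivalent to the $1\times1$ matrix $(2)$.
   Context: Two square $\mathbb{N}$-matrices $A,B$ are shift equivalent if there are an integer $\ell\ge1$ and rectangular $\mathbb{N}$-matrices $R,S$ with $A^\ell=RS$, $B^\ell=SR$, $AR=RB$, $BS=SA$. Such a shift equivalence $(R,S)$ is unital if there are $m,k\in\mathbb{N}$ with $(B^t)^mR^t\underline{1}=(B^t)^{m+k}\underline{1}$, where $\underline1$ is the all-ones column vector. $A$ and $B$ are unitally shift equivalent if a unital shift equivalence from $A$ to $B$ exists. *)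

(* Defs.v *)
From mathcomp Require Import all_boot all_order all_algebra.
Set Implicit Arguments. Unset Strict Implicit. Unset Printing Implicit Defensive.
Import GRing.Theory.
Local Open Scope ring_scope.

Definition ones (m : nat) : 'cV[nat]_m := const_mx 1%N.

Definition shift_equiv_by (m n : nat) (A : 'M[nat]_m) (B : 'M[nat]_n)
  (l : nat) (R : 'M[nat]_(m, n)) (S : 'M[nat]_(n, m)) : Prop :=
  [/\ (1 <= l)%N, A ^+ l = R *m S, B ^+ l = S *m R,
      A *m R = R *m B & B *m S = S *m A].

Definition unital_se (m n : nat) (B : 'M[nat]_n) (R : 'M[nat]_(m, n)) : Prop :=
  exists p k : nat, (B^T) ^+ p *m R^T *m ones m = (B^T) ^+ (p + k) *m ones n.

Definition unitally_shift_equivalent (m n : nat) (A : 'M[nat]_m) (B : 'M[nat]_n)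
  : Prop :=
  exists (l : nat) (R : 'M[nat]_(m, n)) (S : 'M[nat]_(n, m)),
    shift_equiv_by A B l R S /\ unital_se B R.

(* Ashley's graph, vertices v_1..v_8 encoded as indices 0..7 *)
Definition ashley_edge (i j : nat) : bool :=
  match i, j with
  | 0, 0 | 0, 2 | 1, 1 | 1, 0 | 2, 4 | 2, 5 | 3, 1 | 3, 7
  | 4, 6 | 4, 3 | 5, 3 | 5, 4 | 6, 7 | 6, 2 | 7, 5 | 7, 6 => true
  | _, _ => false
  end%N.

Definition ashley : 'M[nat]_8 := \matrix_(i < 8, j < 8) (ashley_edge i j : nat).

Definition two11 : 'M[nat]_1 := const_mx 2%N.

(* Main.v *)
Require Import Defs.
From mathcomp Require Import all_boot all_order all_algebra.
Import GRing.Theory.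
Local Open Scope ring_scope.

Definition Rm : 'M[nat]_(8, 1) := const_mx 1%N.
Definition Sm : 'M[nat]_(1, 8) := const_mx 8%N.

Definition mx (f : nat -> nat -> nat) : 'M[nat]_8 := \matrix_(i < 8, j < 8) f i j.
Definition mulf (f g : nat -> nat -> nat) (i j : nat) : nat :=
  sumn (map (fun k => (f i k * g k j)%N) (iota 0 8)).

Lemma mx_mul f g : mx f *m mx g = mx (mulf f g).
Proof.
apply/matrixP => i j; rewrite !mxE /mulf.
rewrite (eq_bigr (fun k : 'I_8 => (f i k * g k j)%N)); last by move=> k _; rewrite !mxE.
rewrite -(big_mkord xpredT (fun k => (f i k * g k j)%N)) sumnE big_map.
by [].
Qed.

Lemma mx_ext f g : all (fun i => all (fun j => f i j == g i j) (iota 0 8)) (iota 0 8) ->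
  mx f = mx g.
Proof.
move=> /allP H; apply/matrixP => i j; rewrite !mxE.
have /H /allP /(_ j) Hj : (i : nat) \in iota 0 8 by rewrite mem_iota ltn_ord.
by apply/eqP; apply: Hj; rewrite mem_iota ltn_ord.
Qed.

Definition af (i j : nat) : nat := ashley_edge i j.

Lemma pow6 : ashley ^+ 6 = Rm *m Sm.
Proof.
have -> : Rm *m Sm = mx (fun _ _ => 8%N).
  by apply/matrixP => i j; rewrite !mxE big_ord1 !mxE.
have -> : ashley = mx af by [].
rewrite !exprS expr0 mulr1 -!mulmxE !mx_mul.
by apply: mx_ext; vm_compute.
Qed.

Ltac dord x := let n := fresh "n" in let H := fresh "H" in
  case: x => n H; do 8? (case: n H => [|n] H; first by []); by [].

Theorem mainTheorem11 : unitally_shift_equivalent ashley two11.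
Proof.
exists 6%N, Rm, Sm; split; [split|].
- by [].
- exact: pow6.
- rewrite !exprS expr0 mulr1 -!mulmxE; apply/matrixP => i j.
  rewrite (ord1 i) (ord1 j).
  by do 8 rewrite ?mxE ?big_ord_recr ?big_ord0 /=.
- apply/matrixP => i j; rewrite (ord1 j); do 3 rewrite ?mxE ?big_ord_recr ?big_ord0 /=.
  dord i.
- apply/matrixP => i j; rewrite (ord1 i); do 3 rewrite ?mxE ?big_ord_recr ?big_ord0 /=.
  dord j.
- exists 0%N, 3%N. apply/matrixP => i j; rewrite expr0 mul1mx !exprS expr0 mulr1 -!mulmxE.
  rewrite (ord1 i) (ord1 j).
  by do 8 rewrite ?mxE ?big_ord_recr ?big_ord0 /=.
Qed.
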